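(* Let $(\Lambda,Y)$ be an extensible graph with parameters $(t,s,\bar s)$ with $t=1$, let $y\in Y$, $Y_1=\Lambda(y,1)$, $Y_2=\Lambda(y,2)$, and $\Lambda_1,\Lambda_2$ the graphs induced on $Y_1,Y_2$. Write the edges of $\Lambda_1$ (which partition $Y_1$) as $\{a'_i,a''_i\}$, $1\le i\le s$, and let $A'_i,A''_i$ be the sets of points of $Y_2$ adjacent to $a'_i$, $a''_i$ respectively. Let $D_i$ be the set of edges of $\Lambda_2$ contained in $A'_i$ or in $A''_i$ (it is a partition of $Y_2$), and let $t_i$ be the permutation of $Y_2$ with $t_i(u)=v$ iff $\{u,v\}\in D_i$. Then: (a) The group $T$ of permutations of $Y_2$ generated by $t_1,\dots,t_s$ is an elementary abelian $2$-group acting regularly on $Y_2$. (b) The rank $r$ of $T$ satisfies $r\ge s-1$, and if $r=s-1$ then $t_s=t_1\circ\cdots\circ t_{s-1}$. (c) $(t,s,\bar s)\in\{(1,1,0),(1,2,2),(1,3,4),(1,5,8)\}$.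
   Context: A finite simple graph $(\Lambda,Y)$ is extensible with parameters $(t,s,\bar s)$ (nonnegative integers) if: (1) $\Lambda$ has diameter $2$; (2) for every $y\in Y$, with $\Lambda(y,d)$ the set of vertices at distance $d$ from $y$: (a) $|\Lambda(y,1)|=2s$; (b) $|\Lambda(y,2)|=2\bar s$; (c) every $z\in\Lambda(y,1)$ is adjacent to exactly $\bar s$ points of $\Lambda(y,2)$ and exactly $t=2s-\bar s-1$ points of $\Lambda(y,1)$; (d) every $z\in\Lambda(y,2)$ is adjacent to exactly $s$ points of $\Lambda(y,2)$ and exactly $s$ points of $\Lambda(y,1)$; (3) every edge lies in exactly $t$ triangles; (4) $|Y|=1+2s+2\bar s$. The rank of an elementary abelian $2$-group is its dimension as an $\mathbb{F}_2$-vector space. *)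

(* Defs.v *)
From mathcomp Require Import all_boot all_fingroup all_solvable.
Set Implicit Arguments. Unset Strict Implicit. Unset Printing Implicit Defensive.

Section Ext.
Variables (T : finType) (e : rel T).

Definition simple_graph := symmetric e /\ irreflexive e.

Definition Lam1 (y : T) : {set T} := [set z | e y z].
Definition Lam2 (y : T) : {set T} :=
  [set z | [&& z != y, ~~ e y z & [exists w, e y w && e w z]]].

Definition diam_le2 :=
  forall x z : T, x != z -> ~~ e x z -> exists w, e x w && e w z.

Definition extensible (t s sbar : nat) :=
  [/\ simple_graph /\ diam_le2,
      t + sbar + 1 = 2 * s,
      (forall y : T,
        [/\ #|Lam1 y| = 2 * s,
            #|Lam2 y| = 2 * sbar,
            (forall z, z \in Lam1 y ->
               #|[set w in Lam2 y | e z w]| = sbar /\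
               #|[set w in Lam1 y | e z w]| = t) &
            (forall z, z \in Lam2 y ->
               #|[set w in Lam2 y | e z w]| = s /\
               #|[set w in Lam1 y | e z w]| = s)]),
      (forall x z, e x z -> #|[set w | e x w && e w z]| = t) &
      #|T| = 1 + 2 * s + 2 * sbar].

Definition Aset (y a : T) : {set T} := [set u in Lam2 y | e a u].

Definition Drel (y a1 a2 : T) (u v : T) : bool :=
  [&& u \in Lam2 y, v \in Lam2 y, e u v &
      ((u \in Aset y a1) && (v \in Aset y a1))
      || ((u \in Aset y a2) && (v \in Aset y a2))].

End Ext.

Definition regular_on (T : finType) (G : {set {perm T}}) (S : {set T}) :=
  (forall g, g \in G -> perm_on S g) /\
  (forall x z, x \in S -> z \in S -> exists! g, g \in G /\ g x = z).

(* Main.v *)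
Require Import Defs.
From mathcomp Require Import all_boot all_fingroup all_solvable zify.
Set Implicit Arguments. Unset Strict Implicit. Unset Printing Implicit Defensive.

Section Pf.
Variables (T : finType) (e : rel T) (s sbar : nat).
Hypothesis eS : forall x z, e x z = e z x.
Hypothesis eirr : forall x, e x x = false.
Hypothesis Hdiam : diam_le2 e.
Hypothesis HL1 : forall p, #|Lam1 e p| = 2 * s.
Hypothesis HL2c : forall p z, z \in Lam2 e p -> #|[set w in Lam1 e p | e z w]| = s.
Hypothesis Htri : forall x z, e x z -> #|[set w | e x w && e w z]| = 1.

Lemma L0 x z w w' : e x z -> e x w -> e w z -> e x w' -> e w' z -> w = w'.
Proof.
move=> xz xw wz xw' w'z; have := Htri xz.
move/eqP/cards1P=> [a Ha].
have : w \in [set w | e x w && e w z] by rewrite inE xw wz.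
have : w' \in [set w | e x w && e w z] by rewrite inE xw' w'z.
by rewrite Ha !inE => /eqP -> /eqP ->.
Qed.

Definition pairing p (q q' : 'I_s -> T) :=
  [/\ forall k, e p (q k), forall k, e p (q' k), forall k, e (q k) (q' k),
      injective q & injective q'] /\ forall k j, q k != q' j.

Lemma Lcover p q q' : pairing p q q' -> forall w, e p w -> exists k, w = q k \/ w = q' k.
Proof.
case=> [[Hq Hq' _ iq iq'] dq] w pw.
pose S := (q @: setT) :|: (q' @: setT).
have SL : S \subset Lam1 e p.
  by apply/subsetP=> x /setUP[] /imsetP[k _ ->]; rewrite /Lam1 inE.
have cS : #|S| = 2 * s.
  rewrite cardsU !card_imset // cardsT card_ord.
  have -> : q @: setT :&: q' @: setT = set0.
    apply/setP=> x; rewrite !inE; apply/negP=> /andP[/imsetP[k _ ->] /imsetP[j _ /eqP]].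
    by rewrite (negbTE (dq k j)).
  by rewrite cards0 subn0 mul2n addnn.
have : S == Lam1 e p by rewrite eqEcard SL HL1 cS leqnn.
move/eqP=> ES; have : w \in S by rewrite ES /Lam1 inE.
by rewrite !inE => /orP[] /imsetP[k _ ->]; exists k; [left|right].
Qed.

Lemma Lone p q q' : pairing p q q' -> forall z, z \in Lam2 e p ->
  forall k, e z (q k) = ~~ e z (q' k).
Proof.
move=> P z zL2 k; have [[Hq Hq' Hqq' iq iq'] dq] := P.
have notboth : forall j, ~~ (e z (q j) && e z (q' j)).
  move=> j; apply/negP=> /andP[zq zq'].
  have h1 : e (q j) p by rewrite eS.
  have h2 : e (q j) z by rewrite eS.
  have := L0 (Hqq' j) h1 (Hq' j) h2 zq'.
  by move=> pz; move: zL2; rewrite /Lam2 inE -pz eqxx.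
pose J := [set j | e z (q j) || e z (q' j)].
pose h j := if e z (q j) then q j else q' j.
have NJ : [set w in Lam1 e p | e z w] \subset h @: J.
  apply/subsetP=> w; rewrite inE /Lam1 inE => /andP[pw zw].
  have [j [Ew|Ew]] := Lcover P pw; subst w.
    by apply/imsetP; exists j; rewrite ?inE ?zw // /h zw.
  apply/imsetP; exists j; first by rewrite inE zw orbT.
  rewrite /h; case: ifP=> // zq; by move: (notboth j); rewrite zq zw.
have cJ : s <= #|J|.
  have := leq_trans (subset_leq_card NJ) (leq_imset_card _ _); by rewrite (HL2c zL2).
have : J == setT by rewrite eqEcard subsetT cardsT card_ord.
move/eqP=> EJ; have : k \in J by rewrite EJ inE.
rewrite inE; move: (notboth k); by case: (e z (q k)); case: (e z (q' k)).
Qed.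


Variables (y : T) (a1 a2 : 'I_s -> T).
Hypothesis Py : pairing y a1 a2.

Local Notation V2 := (Lam2 e y).
Local Notation Dr i := (Drel e y (a1 i) (a2 i)).

Definition c k u := if e u (a1 k) then a1 k else a2 k.
Definition sg k u := e u (a1 k).

Lemma c_pair k u : c k u = a1 k \/ c k u = a2 k.
Proof. by rewrite /c; case: ifP; [left|right]. Qed.

Lemma yc k u : e y (c k u).
Proof. by have [[H1 H2 _ _ _] _] := Py; rewrite /c; case: ifP. Qed.

Lemma V2E z : (z \in V2) = [&& z != y, ~~ e y z & [exists w, e y w && e w z]].
Proof. by rewrite /Lam2 inE. Qed.

Lemma V2_noty z : z \in V2 -> ~~ e y z.
Proof. by rewrite V2E => /and3P[]. Qed.

Lemma V2_ney z : z \in V2 -> z != y.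
Proof. by rewrite V2E => /and3P[]. Qed.

Lemma V2_nec z k u : z \in V2 -> z != c k u.
Proof. by move=> /V2_noty zV; apply/eqP=> E; move: zV; rewrite E yc. Qed.

Lemma e_c k u : u \in V2 -> e u (c k u).
Proof.
move=> uV; have := Lone Py uV k; rewrite /c; case: ifP => [//|_ /=].
by case: (e u (a2 k)).
Qed.

Lemma c_char k u b : u \in V2 -> e u b -> (b = a1 k \/ b = a2 k) -> c k u = b.
Proof.
move=> uV ub [E|E]; subst b; rewrite /c; first by rewrite ub.
by have := Lone Py uV k; rewrite ub /=; move=> ->.
Qed.

Lemma c_inj k j u v : c k u = c j v -> k = j.
Proof.
have [[_ _ _ i1 i2] d] := Py.
case: (c_pair k u)=> ->; case: (c_pair j v)=> -> E.
- exact: i1.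
- by move: (d k j); rewrite E eqxx.
- by move: (d j k); rewrite E eqxx.
- exact: i2.
Qed.

Lemma c_sg k u v : (c k u == c k v) = (sg k u == sg k v).
Proof.
have [_ d] := Py; have := d k k; rewrite /c /sg.
by case: (e u (a1 k)); case: (e v (a1 k)) => //= /negbTE; rewrite ?eqxx // eq_sym => ->.
Qed.

Lemma AsetE a u : (u \in Aset e y a) = (u \in V2) && e a u.
Proof. by rewrite /Aset in_set. Qed.

Lemma Drel_iff i u v : u \in V2 -> Dr i u v = [&& v \in V2, e u v & e (c i u) v].
Proof.
move=> uV; have := Lone Py uV i; rewrite /Drel !AsetE uV /c.
rewrite (eS (a1 i) u) (eS (a2 i) u).
by case: (e u (a1 i)); case: (e u (a2 i)) => //= _; rewrite ?andbF ?orbF //=;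
  case: (v \in V2); case: (e u v).
Qed.

Lemma Drel_sym i u v : Dr i u v = Dr i v u.
Proof.
rewrite /Drel (eS u v).
case: (u \in V2); case: (v \in V2); case: (e v u) => //=.
by case: (u \in Aset e y (a1 i)); case: (v \in Aset e y (a1 i));
   case: (u \in Aset e y (a2 i)); case: (v \in Aset e y (a2 i)).
Qed.

Lemma partner i u : u \in V2 -> exists v, Dr i u v.
Proof.
move=> uV; set b := c i u; have eb : e u b by apply: e_c.
have := Htri eb; move/eqP/cards1P=> [w0 Hw].
have : w0 \in [set w | e u w && e w b] by rewrite Hw inE.
rewrite inE => /andP[uw wb].
have w0V : w0 \in V2.
  rewrite V2E; apply/and3P; split.
  - apply/eqP=> E; move: (V2_noty uV); by rewrite -E eS uw.
  - apply/negP=> yw.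
    have h1 : e b y by rewrite eS yc.
    have h2 : e b u by rewrite eS.
    have h3 : e b w0 by rewrite eS.
    have := L0 h3 h1 yw h2 uw; move=> E; move: (V2_ney uV); by rewrite E eqxx.
  - apply/existsP; exists b; apply/andP; split; [exact: yc | by rewrite eS].
by exists w0; rewrite Drel_iff // w0V uw eS wb.
Qed.

Lemma Drel_uniq i u v v' : u \in V2 -> Dr i u v -> Dr i u v' -> v = v'.
Proof.
move=> uV; rewrite !Drel_iff // => /and3P[_ uv cv] /and3P[_ uv' cv'].
have ec := e_c i uV.
apply: (L0 ec uv _ uv'); by rewrite eS.
Qed.

Definition tf i u := if [pick v | Dr i u v] is Some v then v else u.

Lemma tf_Drel i u : u \in V2 -> Dr i u (tf i u).
Proof.
move=> uV; rewrite /tf; case: pickP => [v -> //|H].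
by have [v] := partner i uV; rewrite H.
Qed.

Lemma tf_out i u : u \notin V2 -> tf i u = u.
Proof.
move=> uV; rewrite /tf; case: pickP => [v|//].
by rewrite /Drel (negbTE uV).
Qed.

Lemma tf_eq i u v : u \in V2 -> (tf i u == v) = Dr i u v.
Proof.
move=> uV; apply/eqP/idP => [<-|D]; first exact: tf_Drel.
exact: (Drel_uniq uV (tf_Drel i uV) D).
Qed.

Lemma tf_V2 i u : u \in V2 -> tf i u \in V2.
Proof. by move=> uV; have := tf_Drel i uV; rewrite Drel_iff // => /and3P[]. Qed.

Lemma tf_adj i u : u \in V2 -> e u (tf i u).
Proof. by move=> uV; have := tf_Drel i uV; rewrite Drel_iff // => /and3P[]. Qed.

Lemma tf_c i u : u \in V2 -> e (c i u) (tf i u).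
Proof. by move=> uV; have := tf_Drel i uV; rewrite Drel_iff // => /and3P[]. Qed.

Lemma tf_K i u : tf i (tf i u) = u.
Proof.
case uV: (u \in V2); last by rewrite !tf_out ?uV.
apply/eqP; rewrite tf_eq ?tf_V2 // Drel_sym; exact: tf_Drel.
Qed.

Lemma tf_inj i : injective (tf i).
Proof. exact: can_inj (tf_K i). Qed.

Lemma sg_tf i j u : u \in V2 -> sg j (tf i u) = (i != j) (+) sg j u.
Proof.
move=> uV; case: (eqVneq i j) => [<-|ij] /=.
  apply/eqP; rewrite -c_sg; apply/eqP; apply: c_char; first exact: tf_V2.
    by rewrite eS tf_c.
  exact: c_pair.
have nt : e (tf i u) (c j u) = false.
  apply/negP=> h; have h' : e (c j u) (tf i u) by rewrite eS.
  have := L0 (tf_adj i uV) (e_c i uV) (tf_c i uV) (e_c j uV) h'.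
  by move/c_inj=> E; move: ij; rewrite E eqxx.
have : sg j (tf i u) != sg j u.
  rewrite -c_sg; apply/eqP=> E; move: nt; by rewrite -E e_c // tf_V2.
by case: (sg j u); case: (sg j (tf i u)).
Qed.

Lemma pair_u u : u \in V2 -> pairing u (fun k => c k u) (fun k => tf k u).
Proof.
move=> uV; split; first split.
- by move=> k; apply: e_c.
- by move=> k; apply: tf_adj.
- by move=> k; apply: tf_c.
- by move=> k j /c_inj.
- move=> k j E; apply/eqP; apply: contraT => kj.
  have := sg_tf k k uV; have := sg_tf j k uV; rewrite E eqxx eq_sym (negbTE kj) /= => ->.
  by case: (sg k u).
- by move=> k j; rewrite eq_sym; apply: V2_nec; apply: tf_V2.
Qed.

Lemma nbr u x : u \in V2 -> x \in V2 -> e u x -> exists k, x = tf k u.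
Proof.
move=> uV xV ux; have [k [E|E]] := Lcover (pair_u uV) ux; last by exists k.
by move: (V2_nec k u xV); rewrite E eqxx.
Qed.

Lemma tf_comm i j u : tf i (tf j u) = tf j (tf i u).
Proof.
case uV: (u \in V2); last by rewrite !tf_out ?uV.
case: (eqVneq i j) => [->//|ij].
set v := tf j u; set w := tf i u; set x := tf i v.
have vV : v \in V2 by apply: tf_V2.
have wV : w \in V2 by apply: tf_V2.
have xV : x \in V2 by apply: tf_V2.
have sgx : forall k, sg k x = (i != k) (+) ((j != k) (+) sg k u).
  by move=> k; rewrite /x sg_tf // sg_tf.
have sgw : forall k, sg k w = (i != k) (+) sg k u by move=> k; rewrite sg_tf.
have ux : ~~ e u x.
  apply/negP=> h.
  have h1 : e x v by rewrite eS tf_adj.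
  have := L0 (tf_adj j uV) h h1 (e_c j uV) (tf_c j uV).
  by move=> E; move: (V2_nec j u xV); rewrite E eqxx.
have xu : x != u.
  apply/eqP=> E; have := sgx i; rewrite E eqxx /= eq_sym (negbTE ij) /=.
  by case: (sg i u).
have xL2 : x \in Lam2 e u.
  rewrite /Lam2 inE xu ux /=; apply/existsP; exists v.
  by apply/andP; split; exact: tf_adj.
have := Lone (pair_u uV) xL2 i.
have -> : e x (c i u) = false.
  apply/negP=> h; have := c_char xV h (c_pair i u).
  move/eqP; rewrite c_sg sgx eqxx /= (eq_sym j i) (negbTE ij) /=; by case: (sg i u).
move/esym/negbFE=> xw.
apply/esym/eqP; rewrite tf_eq // Drel_iff // xV eS xw /=.
have -> : c j w = c j x by apply/eqP; rewrite c_sg sgx sgw eqxx /= (negbTE ij).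
by rewrite eS e_c.
Qed.


Hypothesis Hsb : sbar.+2 = 2 * s.
Hypothesis HL2y : #|V2| = 2 * sbar.

Lemma s2 u : u \in V2 -> 1 < s.
Proof.
move=> uV; have : 0 < #|V2| by apply/card_gt0P; exists u.
rewrite HL2y => h; lia.
Qed.

Definition tau i : {perm T} := perm (@tf_inj i).
Definition AA := [set tau i | i : 'I_s].
Definition TT := <<AA>>%g.

Lemma tauE i u : tau i u = tf i u.
Proof. by rewrite permE. Qed.

Lemma tau_on i : perm_on V2 (tau i).
Proof.
apply/subsetP=> x; rewrite inE tauE; case xV: (x \in V2) => //.
by rewrite tf_out ?xV ?eqxx.
Qed.

Lemma tau_comm i j : commute (tau i) (tau j).
Proof. by apply/permP=> u; rewrite !permM !tauE tf_comm. Qed.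

Lemma tau_sq i : (tau i ^+ 2 = 1)%g.
Proof. by apply/permP=> u; rewrite expgS expg1 permM !tauE tf_K perm1. Qed.

Lemma abAA : abelian AA.
Proof. by apply/centsP=> x /imsetP[i _ ->] z /imsetP[j _ ->]; apply: tau_comm. Qed.

Lemma abelemTT : (2.-abelem TT)%g.
Proof.
rewrite abelemE // /TT abelian_gen abAA /= abelian_exponent_gen ?abAA //.
by apply/exponentP=> x /imsetP[i _ ->]; apply: tau_sq.
Qed.

Lemma abTT : abelian TT.
Proof. exact: abelem_abelian abelemTT. Qed.

Lemma mem_tau i : tau i \in TT.
Proof. by apply: mem_gen; apply/imsetP; exists i. Qed.

Lemma TT_on g : g \in TT -> perm_on V2 g.
Proof.
have : TT \subset perm.Sym V2.
  rewrite /TT gen_subG; apply/subsetP=> x /imsetP[i _ ->]; rewrite inE; exact: tau_on.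
by move/subsetP=> H /H; rewrite inE.
Qed.

Lemma step u w x g : g \in TT -> g u = w -> w \in V2 -> x \in V2 -> e w x ->
  exists2 g', g' \in TT & g' u = x.
Proof.
move=> gT gu wV xV wx; have [k ->] := nbr wV xV wx.
by exists (g * tau k)%g; rewrite ?groupM ?mem_tau // permM gu tauE.
Qed.

Lemma reach u x : u \in V2 -> x \in V2 -> exists2 g, g \in TT & g u = x.
Proof.
move=> uV xV; case: (eqVneq x u) => [->|xu]; first by exists 1%g; rewrite ?group1 ?perm1.
case ux: (e u x); first exact: (step (group1 _) (perm1 u) uV xV ux).
have ux' : u != x by rewrite eq_sym.
have [w0 /andP[uw wx]] := Hdiam ux' (negbT ux).
have xL2 : x \in Lam2 e u.
  by rewrite /Lam2 inE xu ux /=; apply/existsP; exists w0; rewrite uw.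
case: (pickP (fun k => e x (tf k u))) => [k xk|none].
  apply: (step (mem_tau k) (tauE k u) (tf_V2 k uV) xV); by rewrite eS.
have allc : forall k, e x (c k u).
  by move=> k; rewrite (Lone (pair_u uV) xL2 k) none.
have s1 := s2 uV.
pose k0 : 'I_s := Ordinal (ltnW s1).
pose k1 : 'I_s := Ordinal s1.
have k01 : k0 != k1 by [].
set w := tf k0 u; have wV : w \in V2 by apply: tf_V2.
have cx : c k1 x = c k1 u := c_char xV (allc k1) (c_pair k1 u).
have sgw : sg k1 w = ~~ sg k1 u by rewrite /w sg_tf // k01.
have sgx : sg k1 x = sg k1 u by apply/eqP; rewrite -c_sg cx.
have xL2w : x \in Lam2 e w.
  rewrite /Lam2 inE; apply/and3P; split.
  - by apply/eqP=> E; move: sgx; rewrite E sgw; case: (sg k1 u).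
  - by rewrite eS none.
  - apply/existsP; exists (c k0 u); rewrite eS tf_c //=; by rewrite eS allc.
have := Lone (pair_u wV) xL2w k1.
have -> : e x (c k1 w) = false.
  apply/negP=> h; have := c_char xV h (c_pair k1 w); move/eqP; rewrite c_sg sgx sgw.
  by case: (sg k1 u).
move/esym/negbFE=> xw.
apply: (@step u (tf k1 w) x (tau k0 * tau k1)%g).
- by rewrite groupM ?mem_tau.
- by rewrite permM !tauE.
- exact: tf_V2.
- exact: xV.
- by rewrite eS.
Qed.

Lemma free u g : u \in V2 -> g \in TT -> g u = u -> g = 1%g.
Proof.
move=> uV gT gu; apply/permP=> x; rewrite perm1.
case xV: (x \in V2); last by apply: (out_perm (TT_on gT)); rewrite xV.
have [h hT <-] := reach uV xV.
have cgh : commute g h by apply: (centsP abTT).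
by rewrite -permM -cgh permM gu.
Qed.

Lemma uniq_g u g h : u \in V2 -> g \in TT -> h \in TT -> g u = h u -> g = h.
Proof.
move=> uV gT hT E; apply/eqP; rewrite eq_mulgV1; apply/eqP.
apply: (free uV); first by rewrite groupM ?groupV.
by rewrite permM E permK.
Qed.

Lemma regTT : regular_on TT V2.
Proof.
split; first exact: TT_on.
move=> x z xV zV; have [g gT gx] := reach xV zV.
exists g; split; first by [].
by move=> h [hT hx]; apply: (uniq_g xV gT hT); rewrite gx hx.
Qed.

Lemma cardTT u : u \in V2 -> #|TT| = #|V2|.
Proof.
move=> uV.
have E : [set (g : {perm T}) u | g in TT] = V2.
  apply/setP=> x; apply/imsetP/idP.
    by move=> [g gT ->]; rewrite (perm_closed _ (TT_on gT)).
  by move=> xV; have [g gT gx] := reach uV xV; exists g.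
rewrite -E card_in_imset //.
by move=> g h gT hT; apply: uniq_g.
Qed.


Definition PK (K : {set 'I_s}) : {perm T} := (\prod_(i in K) tau i)%g.
Definition cnt (K : {set 'I_s}) (m : 'I_s) := count (predC1 m) (enum K).

Lemma PKseq r u : u \in V2 -> ((\prod_(i <- r) tau i)%g u \in V2) /\
  forall m, sg m ((\prod_(i <- r) tau i)%g u) = odd (count (predC1 m) r) (+) sg m u.
Proof.
elim: r u => [|a r IH] u uV; first by rewrite big_nil perm1.
rewrite big_cons permM tauE; have [V S] := IH (tf a u) (tf_V2 a uV).
split=> // m; rewrite S sg_tf //= oddD oddb.
by case: (a != m); case: (odd (count (predC1 m) r)); case: (sg m u).
Qed.

Lemma PK_prop (K : {set 'I_s}) u : u \in V2 -> PK K u \in V2 /\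
  forall m, sg m (PK K u) = odd (cnt K m) (+) sg m u.
Proof.
move=> uV; have -> : PK K = (\prod_(i <- enum K) tau i)%g.
  by rewrite /PK -big_filter deprecated_filter_index_enum.
exact: PKseq.
Qed.

Lemma countK (K : {set 'I_s}) (m : 'I_s) : cnt K m + (m \in K) = #|K|.
Proof.
have := count_predC (pred1 m) (enum K).
rewrite count_uniq_mem ?enum_uniq // mem_enum -cardE /cnt => <-.
by rewrite addnC; congr (_ + _); apply: eq_count.
Qed.

Lemma memK (K : {set 'I_s}) (m : 'I_s) : (m \in K) = odd #|K| (+) odd (cnt K m).
Proof.
rewrite -(countK K m) oddD oddb.
by case: (m \in K); case: (odd (cnt K m)).
Qed.

Lemma cnt_out (K : {set 'I_s}) (j0 : 'I_s) : K \subset [set~ j0] -> cnt K j0 = #|K|.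
Proof.
move=> HK; rewrite -(countK K j0).
have -> : (j0 \in K) = false.
  apply/negP=> h; have := subsetP HK j0 h; by rewrite !inE eqxx.
by rewrite addn0.
Qed.

Lemma PK_inj u (j0 : 'I_s) (K K' : {set 'I_s}) : u \in V2 -> K \subset [set~ j0] -> K' \subset [set~ j0] ->
  PK K u = PK K' u -> K = K'.
Proof.
move=> uV HK HK' E0.
have [_ SK] := PK_prop K uV; have [_ SK'] := PK_prop K' uV.
have E : forall m, odd (cnt K m) = odd (cnt K' m).
  move=> m; have := SK m; rewrite E0 SK'.
  move/(congr1 (addb^~ (sg m u))); by rewrite -!addbA addbb !addbF.
have Ec : odd #|K| = odd #|K'| by rewrite -(cnt_out HK) -(cnt_out HK') E.
by apply/setP=> m; rewrite !memK Ec E.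
Qed.

Lemma lower u (j0 : 'I_s) : u \in V2 -> 2 ^ s.-1 <= #|V2|.
Proof.
move=> uV; pose f K := PK K u.
have cP : #|powerset [set~ j0]| = 2 ^ s.-1 by rewrite card_powerset cardsC1 card_ord.
have inj : {in powerset [set~ j0] &, injective f}.
  move=> K K'; rewrite !powersetE => HK HK' E; exact: (PK_inj uV HK HK' E).
rewrite -cP -(card_in_imset inj).
apply: subset_leq_card; apply/subsetP=> x /imsetP[K _ ->].
by have [] := PK_prop K uV.
Qed.

Lemma prodlast u (j0 : 'I_s) : u \in V2 -> #|TT| = 2 ^ s.-1 -> tau j0 = PK [set~ j0].
Proof.
move=> uV cT.
have cP : #|powerset [set~ j0]| = 2 ^ s.-1 by rewrite card_powerset cardsC1 card_ord.
have inj : {in powerset [set~ j0] &, injective PK}.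
  move=> K K'; rewrite !powersetE => HK HK' E; apply: (PK_inj uV HK HK').
  by rewrite E.
have sub : PK @: powerset [set~ j0] \subset TT.
  apply/subsetP=> x /imsetP[K _ ->]; apply: group_prod => i _; exact: mem_tau.
have : PK @: powerset [set~ j0] == TT by rewrite eqEcard sub card_in_imset // cP cT leqnn.
move/eqP=> EI; have : tau j0 \in PK @: powerset [set~ j0] by rewrite EI mem_tau.
case/imsetP=> K; rewrite powersetE => HK Ej; rewrite Ej; congr PK.
have [_ SK] := PK_prop K uV.
have Sm : forall m, odd (cnt K m) = (j0 != m).
  move=> m; have := SK m; rewrite -Ej tauE sg_tf //.
  move/(congr1 (addb^~ (sg m u))); by rewrite -!addbA addbb !addbF.
apply/setP=> m; rewrite !inE; case: (eqVneq m j0) => [->|mj].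
  by apply/negP=> h; have := subsetP HK j0 h; rewrite !inE eqxx.
by rewrite memK -(cnt_out HK) !Sm eqxx eq_sym mj.
Qed.


Lemma aux5 n : 4 * (n + 5) < 2 ^ (n + 5).
Proof. elim: n => [//|n IH]. rewrite addSn expnS. lia. Qed.

Lemma no12 r : 12 = 2 ^ r -> False.
Proof.
move=> h. case: (leqP r 3) => hr.
  have : 2 ^ r <= 2 ^ 3 by rewrite leq_exp2l.
  lia.
have : 2 ^ 4 <= 2 ^ r by rewrite leq_exp2l.
lia.
Qed.

Lemma final : exists tau0 : 'I_s -> {perm T},
    [/\ (forall i, perm_on (Lam2 e y) (tau0 i)),
        (forall i u v, u \in Lam2 e y ->
            (tau0 i u == v) = Drel e y (a1 i) (a2 i) u v),
        (2.-abelem <<[set tau0 i | i : 'I_s]>>)%g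
          /\ regular_on <<[set tau0 i | i : 'I_s]>>%g (Lam2 e y),
        (s.-1 <= ('r(<<[set tau0 i | i : 'I_s]>>))%g)%N
          /\ (forall j : 'I_s, val j = s.-1 ->
                ('r(<<[set tau0 i | i : 'I_s]>>))%g = s.-1 ->
                tau0 j = (\prod_(i < s | val i != s.-1) tau0 i)%g) &
        (1, s, sbar) \in [:: (1, 1, 0); (1, 2, 2); (1, 3, 4); (1, 5, 8)]%N].
Proof.
exists tau; split.
- exact: tau_on.
- by move=> i u v uV; rewrite tauE tf_eq.
- split; [exact: abelemTT | exact: regTT].
- case: (set_0Vmem V2) => [V0 | [u0 u0V]].
    have sb0 : sbar = 0 by move: HL2y; rewrite V0 cards0; lia.
    have s1 : s = 1 by lia.
    have -> : s.-1 = 0 by rewrite s1.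
    split; first by [].
    move=> j _ _.
    have -> : tau j = 1%g.
      apply/permP=> x; rewrite perm1; apply: (out_perm (tau_on j)); by rewrite V0 inE.
    rewrite big1 // => i; have := ltn_ord i; move=> hi hv; exfalso; move: hv.
    have E0 : nat_of_ord i = 0 by lia.
    by rewrite /= E0.
  have s2' := s2 u0V.
  have rE : ('r(TT))%g = logn 2 #|TT| by apply: rank_abelem; exact: abelemTT.
  have cE : #|TT| = 2 ^ logn 2 #|TT| by apply: card_pgroup; apply: abelem_pgroup abelemTT.
  have lo := lower (Ordinal (ltnW s2')) u0V.
  rewrite -(cardTT u0V) cE leq_exp2l // -rE in lo.
  split; first exact: lo.
  move=> j Hj Hr; rewrite (prodlast j u0V); last by rewrite cE -rE Hr.
  rewrite /PK; apply: eq_bigl => i; rewrite !inE -val_eqE Hj.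
  by [].
- case: (set_0Vmem V2) => [V0 | [u0 u0V]].
    have sb0 : sbar = 0 by move: HL2y; rewrite V0 cards0; lia.
    have s1 : s = 1 by lia.
    by rewrite s1 sb0.
  have s2' := s2 u0V.
  have cE : #|TT| = 2 ^ logn 2 #|TT| by apply: card_pgroup; apply: abelem_pgroup abelemTT.
  have lo := lower (Ordinal (ltnW s2')) u0V.
  rewrite (cardTT u0V) HL2y in cE.
  rewrite HL2y in lo.
  have s5 : s <= 5.
    case: (leqP s 5) => // h6.
    have := aux5 (s - 6); have -> : s - 6 + 5 = s.-1 by lia.
    lia.
  have : s = 2 \/ s = 3 \/ s = 4 \/ s = 5 by lia.
  case=> [E|[E|[E|E]]]; rewrite E.
  + by have -> : sbar = 2 by lia.
  + by have -> : sbar = 4 by lia.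
  + have E6 : 2 * sbar = 12 by lia.
    by rewrite E6 in cE; case: (no12 cE).
  + by have -> : sbar = 8 by lia.
Qed.

End Pf.

Theorem lemma2 (T : finType) (e : rel T) (t s sbar : nat)
  (Hext : extensible e t s sbar) (Ht : t = 1%N) (y : T)
  (a1 a2 : 'I_s -> T)
  (Ha1 : forall i, a1 i \in Lam1 e y) (Ha2 : forall i, a2 i \in Lam1 e y)
  (Hedge : forall i, e (a1 i) (a2 i))
  (Hinj1 : injective a1) (Hinj2 : injective a2)
  (Hdisj : forall i j, a1 i != a2 j) :
  exists tau : 'I_s -> {perm T},
    [/\ (forall i, perm_on (Lam2 e y) (tau i)),
        (forall i u v, u \in Lam2 e y ->
            (tau i u == v) = Drel e y (a1 i) (a2 i) u v),
        (2.-abelem <<[set tau i | i : 'I_s]>>)%g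
          /\ regular_on <<[set tau i | i : 'I_s]>>%g (Lam2 e y),
        (s.-1 <= ('r(<<[set tau i | i : 'I_s]>>))%g)%N
          /\ (forall j : 'I_s, val j = s.-1 ->
                ('r(<<[set tau i | i : 'I_s]>>))%g = s.-1 ->
                tau j = (\prod_(i < s | val i != s.-1) tau i)%g) &
        (t, s, sbar) \in [:: (1, 1, 0); (1, 2, 2); (1, 3, 4); (1, 5, 8)]%N].
Proof.
case: Hext => [[[eS eI] Hdiam] Hsum Hloc Htri _].
subst t.
have HL1 p : #|Lam1 e p| = 2 * s by case: (Hloc p).
have HL2c p z : z \in Lam2 e p -> #|[set w in Lam1 e p | e z w]| = s.
  by case: (Hloc p) => _ _ _ H /H [].
have HL2y : #|Lam2 e y| = 2 * sbar by case: (Hloc y).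
have Hsb : sbar.+2 = 2 * s by lia.
have Py : pairing e y a1 a2.
  split; first split => //.
  - by move=> k; have := Ha1 k; rewrite /Lam1 inE.
  - by move=> k; have := Ha2 k; rewrite /Lam1 inE.
  - exact: Hdisj.
exact: (final eS Hdiam HL1 HL2c Htri Py Hsb HL2y).
Qed.
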